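(* Let $c,M\in\mathbb{N}$ with $c,M\ge1$, and let $A_{c,M}=(n_A)_{n\ge0}$ be defined by $0_A=1$, $n_A=1$ for $1\le n<M$, and $n_A=c$ for $n\ge M$. Then $A_{c,M}$ is a cobweb tiling sequence. (In particular, for $M=1$, the almost constant sequence $0_A=1$, $n_A=c$ for $n\ge1$, is a cobweb tiling sequence.)
   Context: Notation: $n_F\equiv F_n$. A sequence $F=(n_F)_{n\ge0}$ of natural numbers with $0_F=1$ is cobweb-admissible iff every $F$-nomial coefficient $\binom{n}{k}_F=\frac{n_F(n-1)_F\cdots(n-k+1)_F}{1_F2_F\cdots k_F}$, $0\le k\le n$, is a nonnegative integer. The cobweb poset of $F$ has, for each $s\ge1$, a level $\Phi_s$ consisting of $s_F$ distinct vertices (levels pairwise disjoint), plus a root level $\Phi_0$ with one vertex; for $x\in\Phi_i$, $y\in\Phi_j$ one has $x<y$ iff $i<j$. For $1\le a\le b$, the layer $\langle\Phi_a\to\Phi_b\rangle$ is the subposet on $\Phi_a\cup\dots\cup\Phi_b$; it has $m=b-a+1$ levels and its maximal chains form the set $\Phi_a\times\dots\times\Phi_b$. For a permutation $\sigma$ of $\{1,\dots,m\}$, a block of type $\sigma P_m$ in this layer is the subposet induced on $V_a\cup\dots\cup V_b$ where $V_{a-1+i}\subseteq\Phi_{a-1+i}$ and $|V_{a-1+i}|=\sigma(i)_F$ for $i=1,\dots,m$; its maximal chains form the set $V_a\times\dots\times V_b$. A tiling of the layer is a finite family of such blocks ($\sigma$ may vary from block to block) whose sets $V_a\times\dots\times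 V_b$ partition $\Phi_a\times\dots\times\Phi_b$ (pairwise max-disjoint and covering all maximal chains). A cobweb tiling sequence is a cobweb-admissible sequence $F$ such that for all $1\le a\le b$ the layer $\langle\Phi_a\to\Phi_b\rangle$ admits a tiling by blocks of type $\sigma P_{b-a+1}$. *)

(* Defs.v *)
From mathcomp Require Import all_boot all_fingroup.
Set Implicit Arguments. Unset Strict Implicit. Unset Printing Implicit Defensive.

Definition fnom_num (F : nat -> nat) (n k : nat) : nat := \prod_(i < k) F (n - i).
Definition fnom_den (F : nat -> nat) (k : nat) : nat := \prod_(i < k) F i.+1.

(* Cobweb-admissible: 0_F = 1 and every F-nomial coefficient (num/den) is a
   nonnegative integer, i.e. the denominator is nonzero and divides the numerator. *)
Definition cobweb_admissible (F : nat -> nat) : Prop :=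
  F 0 = 1 /\
  forall n k, k <= n -> 0 < fnom_den F k /\ fnom_den F k %| fnom_num F n k.

(* Level Phi_s of the cobweb poset is represented by 'I_(F s).
   The layer <Phi_a -> Phi_(a+m-1)> has m levels; level number i : 'I_m of the
   layer is Phi_(a+i).  A maximal chain is a choice x i \in Phi_(a+i) for each i. *)
Definition layer_chain (F : nat -> nat) (a m : nat) : Type :=
  forall i : 'I_m, 'I_(F (a + i)).

Definition block_sets (F : nat -> nat) (a m : nat) : Type :=
  forall i : 'I_m, {set 'I_(F (a + i))}.

(* V is a block of type sigma P_m: |V_(a-1+i)| = sigma(i)_F for i = 1..m;
   with 0-based indices i : 'I_m and sigma : 'S_m this reads
   #|V i| = F (sigma i + 1). *)
Definition is_block_of_type (F : nat -> nat) (a m : nat) (sigma : 'S_m)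
  (V : block_sets F a m) : Prop :=
  forall i : 'I_m, #|V i| = F (sigma i).+1.

Definition chain_in_block (F : nat -> nat) (a m : nat) (V : block_sets F a m)
  (x : layer_chain F a m) : Prop :=
  forall i : 'I_m, x i \in V i.

Definition layer_tileable (F : nat -> nat) (a m : nat) : Prop :=
  exists (k : nat) (sigma : 'I_k -> 'S_m) (V : 'I_k -> block_sets F a m),
    (forall j : 'I_k, is_block_of_type (sigma j) (V j)) /\
    (forall x : layer_chain F a m, exists j : 'I_k, chain_in_block (V j) x) /\
    (forall (j1 j2 : 'I_k) (x : layer_chain F a m),
        chain_in_block (V j1) x -> chain_in_block (V j2) x -> j1 = j2).

Definition cobweb_tiling_sequence (F : nat -> nat) : Prop :=
  cobweb_admissible F /\
  forall a b : nat, 1 <= a -> a <= b -> layer_tileable F a (b - a + 1).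

Definition A_seq (c M : nat) (n : nat) : nat :=
  if n == 0 then 1 else if n < M then 1 else c.

(* Main.v *)
Require Import Defs.
From mathcomp Require Import all_boot all_fingroup.
Set Implicit Arguments. Unset Strict Implicit. Unset Printing Implicit Defensive.

Lemma A_pos c M n : 1 <= c -> 0 < A_seq c M n.
Proof. by rewrite /A_seq; case: (n == 0) => //; case: (n < M). Qed.

Lemma A_dvd c M p q : 1 <= p -> p <= q -> A_seq c M p %| A_seq c M q.
Proof.
rewrite /A_seq => Hp Hpq.
have -> : (p == 0) = false by case: p Hp Hpq.
have -> : (q == 0) = false by case: q Hpq => //; case: p Hp.
case: ltnP => // HMp.
by rewrite ltnNge (leq_trans HMp Hpq).
Qed.

Lemma A_adm c M k n : k <= n ->
  fnom_den (A_seq c M) k %| fnom_num (A_seq c M) n k.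
Proof.
elim: k n => [|k IH] n Hk.
  by rewrite /fnom_den /fnom_num !big_ord0.
rewrite /fnom_den /fnom_num big_ord_recr big_ord_recl /= subn0 mulnC.
apply: dvdn_mul; first exact: A_dvd.
have Hn : 0 < n by apply: leq_trans Hk.
have Hk' : k <= n.-1 by rewrite -ltnS prednK.
have H := IH n.-1 Hk'.
rewrite /fnom_den /fnom_num in H.
have E : \prod_(i < k) A_seq c M (n - bump 0 i) = \prod_(i < k) A_seq c M (n.-1 - i).
  by apply: eq_bigr => i _; rewrite -subn1 -subnDA add1n.
by rewrite E.
Qed.

Lemma A_tile c M a m : 1 <= c -> 1 <= a -> layer_tileable (A_seq c M) a m.
Proof.
move=> hc ha.
set F := A_seq c M.
pose T := {dffun forall i : 'I_m, 'I_(F (a + i))}.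
have d : forall i : 'I_m, 'I_(F (a + i)) by move=> i; exact: (@Ordinal _ 0 (A_pos M (a + i) hc)).
pose norm (y : T) : T := @finfun _ (fun i : 'I_m => 'I_(F (a + i))) (fun i : 'I_m => if i.+1 < M then y i else d i).
pose S := [set norm y | y in T].
exists #|S|, (fun _ => 1%g).
exists (fun (j : 'I_#|S|) (i : 'I_m) => if i.+1 < M then [set (enum_val j : T) i] else [set: 'I_(F (a + i))]).
split; [|split].
- move=> j i; rewrite perm1.
  case: ifP => H.
    by rewrite cards1 /F /A_seq H.
  rewrite cardsT card_ord /F /A_seq /=.
  have -> : (a + i == 0) = false by rewrite addn_eq0 (negbTE (lt0n_neq0 ha)).
  have H1 : M <= i.+1 by rewrite leqNgt H.
  have H2 : i.+1 <= a + i by rewrite -add1n leq_add2r.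
  by rewrite ltnNge (leq_trans H1 H2) /= H.
- move=> x.
  pose y : T := finfun x.
  have Hy : norm y \in S by apply: imset_f.
  exists (enum_rank_in Hy (norm y)) => i.
  rewrite enum_rankK_in //.
  case: ifP => H; last by rewrite inE.
  by rewrite inE /norm ffunE H /y ffunE.
- move=> j1 j2 x H1 H2.
  apply: enum_val_inj.
  have [y1 _ E1] := imsetP (enum_valP j1).
  have [y2 _ E2] := imsetP (enum_valP j2).
  apply/ffunP => i.
  move: (H1 i) (H2 i); case: ifP => H.
    by rewrite !inE => /eqP <- /eqP <-.
  by rewrite E1 E2 /norm !ffunE H.
Qed.

Theorem mainTheorem9 (c M : nat) (hc : 1 <= c) (hM : 1 <= M) :
  cobweb_tiling_sequence (A_seq c M).
Proof.
split.
  split; first by [].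
  move=> n k Hk; split; last exact: A_adm.
  rewrite /fnom_den; apply: prodn_gt0 => i; exact: A_pos.
move=> a b ha _; exact: A_tile.
Qed.
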